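(* The Lagrange spectrum of $\mathbb{Q}((1/T))$ equals $$\{L(A): A=(g_i)_{i\in\mathbb{Z}} \text{ a doubly infinite sequence of polynomials } g_i\in\mathbb{Q}[T] \text{ with } \deg g_i\ge1\}.$$
   Context: $\mathbb{Q}((1/T))$ is the field of formal Laurent series in $1/T$ over $\mathbb{Q}$; $\deg$ of a nonzero series is the exponent of its leading term, $\deg0=-\infty$. For polynomials $c_0,c_1,\dots$ with $\deg c_j\ge1$ for $j\ge1$, $[c_0,c_1,c_2,\dots]=c_0+\cfrac{1}{c_1+\cfrac{1}{c_2+\cdots}}$ converges in $\mathbb{Q}((1/T))$. For a doubly infinite sequence $A=(g_i)_{i\in\mathbb{Z}}$ of polynomials of positive degree, $\lambda_i(A)=[g_i,g_{i+1},\dots]+[0,g_{i-1},g_{i-2},\dots]$ and $L(A)=\limsup_{|i|\to\infty}\deg\lambda_i(A)$ (the larger of the limsups as $i\to+\infty$ and $i\to-\infty$), a value in $\mathbb{Z}\cup\{\infty\}$. Lagrange spectrum: for $\alpha\notin\mathbb{Q}(T)$, $l(\alpha)\in\mathbb{Z}\cup\{\infty\}$ is the supremum of integers $k$ such that $\deg(\alpha-p/q)\le-2\deg q-k$ for infinitely many $p,q\in\mathbb{Q}[T]$, $q\neq0$; the Lagrange spectrum is $\{l(\alpha):\alpha\in\mathbb{Q}((1/T))\setminus\mathbb{Q}(T)\}$. *)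

(* Defs.v *)
From HB Require Import structures.
From mathcomp Require Import all_boot all_order all_algebra.
From mathcomp Require Import all_classical all_reals.
From mathcomp Require Import ereal topology normedtype sequences.
From mathcomp Require Import Rstruct.
From Stdlib Require Import ClassicalEpsilon.

Set Implicit Arguments. Unset Strict Implicit. Unset Printing Implicit Defensive.
Import Order.TTheory GRing.Theory Num.Theory.
Local Open Scope ring_scope.
Local Open Scope classical_set_scope.

(* ---------- Formal Laurent series in 1/T over Q ----------
   A series is represented by an integer [top] and a coefficient stream
   [fc : nat -> rat]; it denotes  sum_{k>=0} fc k * T^(top - k).
   Two representations denote the same series iff [coef] agrees. *)
Record LS := mkLS { top : int; fc : nat -> rat }.

Definition coef (x : LS) (n : int) : rat :=
  if n <= top x then fc x `|top x - n|%N else 0.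

Definition eqLS (x y : LS) : Prop := forall n, coef x n = coef y n.

Definition LSzero : LS := mkLS 0 (fun _ => 0).

Definition LSpoly (p : {poly rat}) : LS :=
  mkLS (size p)%:Z (fun k => if (k <= size p)%N then p`_(size p - k) else 0).

Definition LSone : LS := LSpoly 1.

Definition LSadd (x y : LS) : LS :=
  let t := Num.max (top x) (top y) in
  mkLS t (fun k => coef x (t - k%:Z) + coef y (t - k%:Z)).

Definition LSopp (x : LS) : LS := mkLS (top x) (fun k => - fc x k).

Definition LSsub (x y : LS) : LS := LSadd x (LSopp y).

Definition LSmul (x y : LS) : LS :=
  mkLS (top x + top y) (fun k => \sum_(j < k.+1) fc x j * fc y (k - j)).

(* multiplicative inverse (chosen; unspecified for 0) *)
Definition LSinv (x : LS) : LS :=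
  epsilon (inhabits LSzero) (fun y => eqLS (LSmul x y) LSone).

Definition LSdiv (x y : LS) : LS := LSmul x (LSinv y).

(* degree, in the extended reals; deg 0 = -oo *)
Notation RR := Rdefinitions.R.
Definition deg (x : LS) : \bar RR :=
  ereal_sup [set (n%:~R)%:E | n in [set n : int | coef x n != 0]].

Fixpoint cfin (c : nat -> LS) (n : nat) : LS :=
  match n with
  | 0 => c 0%N
  | m.+1 => LSadd (c 0%N) (LSinv (cfin (fun k => c k.+1) m))
  end.

(* x is the limit in Q((1/T)) of the convergents [c_0,...,c_n] *)
Definition cf_limit (c : nat -> LS) (x : LS) : Prop :=
  forall M : int, exists n0 : nat, forall n : nat, (n0 <= n)%N ->
    forall m : int, M < m -> coef (cfin c n) m = coef x m.

Definition cf (c : nat -> LS) : LS := epsilon (inhabits LSzero) (cf_limit c).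

Definition lambda (g : int -> {poly rat}) (i : int) : LS :=
  LSadd (cf (fun n => LSpoly (g (i + n%:Z))))
        (cf (fun n => if n == 0%N then LSzero else LSpoly (g (i - n%:Z)))).

Definition LA (g : int -> {poly rat}) : \bar RR :=
  maxe (limn_esup (fun n : nat => deg (lambda g n%:Z)))
       (limn_esup (fun n : nat => deg (lambda g (- n%:Z)))).

Definition is_ratfun (a : LS) : Prop :=
  exists p q : {poly rat}, q != 0 /\ eqLS a (LSdiv (LSpoly p) (LSpoly q)).

(* the set of (distinct) rational functions p/q, q <> 0, with
   deg(a - p/q) <= -2 deg q - k; elements are identified by their
   coefficient functions *)
Definition approx_set (a : LS) (k : int) : set (int -> rat) :=
  [set coef (LSdiv (LSpoly pq.1) (LSpoly pq.2)) | pq in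
    [set pq : {poly rat} * {poly rat} | pq.2 != 0 /\
      (deg (LSsub a (LSdiv (LSpoly pq.1) (LSpoly pq.2)))
        <= ((- 2 * ((size pq.2)%:Z - 1) - k)%:~R)%:E)%E]].

Definition lagr (a : LS) : \bar RR :=
  ereal_sup [set (k%:~R)%:E | k in [set k : int | infinite_set (approx_set a k)]].

Definition lagrange_spectrum : set (\bar RR) :=
  [set lagr a | a in [set a | ~ is_ratfun a]].

Definition L_values : set (\bar RR) :=
  [set LA g | g in [set g : int -> {poly rat} | forall i, (1 < size (g i))%N]].

(* Main.v *)
From Stdlib Require Setoid Ring.
Require Import Defs.
From HB Require Import structures.
From mathcomp Require Import all_boot all_order all_algebra.
From mathcomp Require Import all_classical all_reals.
From mathcomp Require Import ereal topology normedtype sequences.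
From mathcomp Require Import Rstruct.
From mathcomp Require Import zify.
From Stdlib Require Import ClassicalEpsilon.
Set Implicit Arguments. Unset Strict Implicit. Unset Printing Implicit Defensive.
Import Order.TTheory GRing.Theory Num.Theory.
Local Open Scope ring_scope.

Local Notation "x ~= y" := (eqLS x y) (at level 70).

Lemma coef_gt x n : top x < n -> coef x n = 0.
Proof. by rewrite /coef leNgt => ->. Qed.

Lemma coef_top x (k : nat) : coef x (top x - k%:Z) = fc x k.
Proof. rewrite /coef. have -> : top x - k%:Z <= top x by lia. congr fc. lia. Qed.

Lemma coefLSD x y n : coef (LSadd x y) n = coef x n + coef y n.
Proof.
rewrite {1}/coef /LSadd /=; set t := Num.max (top x) (top y).
have hx : top x <= t by rewrite le_max lexx.
have hy : top y <= t by rewrite le_max lexx orbT.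
case: ifP => hn.
  by have -> : t - `|t - n|%N%:Z = n by lia.
rewrite !coef_gt ?addr0 //; lia.
Qed.

Lemma coefLSN x n : coef (LSopp x) n = - coef x n.
Proof. by rewrite /coef /=; case: ifP; rewrite ?oppr0. Qed.

Lemma coefLS0 n : coef LSzero n = 0.
Proof. by rewrite /coef; case: ifP. Qed.

Lemma coefLSB x y n : coef (LSsub x y) n = coef x n - coef y n.
Proof. by rewrite coefLSD coefLSN. Qed.

Lemma coefLSP p n : coef (LSpoly p) n = if 0 <= n then p`_`|n|%N else 0.
Proof.
rewrite /coef /LSpoly /=; case: ifP => hn.
  case: ifP => h0.
    rewrite ifT; last by lia.
    congr (p`_ _); lia.
  by rewrite ifF //; apply/negbTE/negP => ?; lia.
case: ifP => h0 //; rewrite nth_default //; lia.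
Qed.

Lemma coefLS1 n : coef LSone n = (n == 0)%:R.
Proof.
rewrite /LSone coefLSP; case: ifP => h.
  case: (n =P 0) => [->|hn]; first by rewrite coefC.
  rewrite coefC; case: (`|n|%N =P 0%N) => //; lia.
case: (n =P 0) => //; lia.
Qed.

Definition term x y n (i : int) := coef x i * coef y (n - i).
Definition W x y n (h : int) (N : nat) := \sum_(j < N) term x y n (h - j%:Z).

Lemma W_base x y n : n <= top x + top y ->
  coef (LSmul x y) n = W x y n (top x) (absz (top x + top y - n)%R).+1.
Proof.
move=> hn; rewrite {1}/coef /= hn /W; apply: eq_bigr => j _.
rewrite /term coef_top; congr (_ * _).
have hj := ltn_ord j.
set k := absz (top x + top y - n)%R.
have -> : n - (top x - (nat_of_ord j)%:Z) = top y - (subn k j)%:Z by rewrite /k; lia.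
by rewrite coef_top.
Qed.

Lemma W_top x y n h N d : (forall i, h < i -> term x y n i = 0) ->
  W x y n (h + d%:Z) (N + d) = W x y n h N.
Proof.
move=> H; elim: d => [|d IH]; first by rewrite addr0 addn0.
rewrite -IH addnS {1}/W big_ord_recl H /=; last by lia.
rewrite add0r /W; apply: eq_bigr => j _; congr term; rewrite /bump /=; lia.
Qed.

Lemma W_bot x y n h N d : (forall i, i <= h - N%:Z -> term x y n i = 0) ->
  W x y n h (N + d) = W x y n h N.
Proof.
move=> H; elim: d => [|d IH]; first by rewrite addn0.
rewrite -IH addnS {1}/W big_ord_recr /= H; last by lia.
by rewrite addr0.
Qed.

Lemma coefLSM x y n h N :
  (forall i, h < i -> term x y n i = 0) ->
  (forall i, i <= h - N%:Z -> term x y n i = 0) ->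
  coef (LSmul x y) n = W x y n h N.
Proof.
move=> Ht Hb.
have tx i : top x < i -> term x y n i = 0 by move=> hi; rewrite /term coef_gt ?mul0r.
case: (lerP n (top x + top y)) => hn; last first.
  rewrite coef_gt //= /W big1 // => j _.
  case: (lerP (h - j%:Z) (top x)) => hj; last by rewrite tx.
  by rewrite /term (@coef_gt y) ?mulr0 //; lia.
set k := absz (top x + top y - n)%R.
have bx i : i <= top x - k.+1%:Z -> term x y n i = 0.
  by move=> hi; rewrite /term (@coef_gt y) ?mulr0 //; lia.
set H := Num.max h (top x).
set lo := Num.min (h - N%:Z) (top x - k.+1%:Z).
have h1 : h <= H by rewrite le_max lexx.
have h2 : top x <= H by rewrite le_max lexx orbT.
have h3 : lo <= h - N%:Z by rewrite ge_min lexx.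
have h4 : lo <= top x - k.+1%:Z by rewrite ge_min lexx orbT.
pose d1 := absz (H - h)%R. pose e1 := absz (h - N%:Z - lo)%R.
pose d2 := absz (H - top x)%R. pose e2 := absz (top x - k.+1%:Z - lo)%R.
have E1 : W x y n h N = W x y n H (N + e1 + d1).
  rewrite -(W_bot e1 Hb) -(W_top _ d1); last first.
    by move=> i hi; apply: Ht.
  congr W; rewrite /d1; lia.
have E2 : coef (LSmul x y) n = W x y n H (k.+1 + e2 + d2).
  rewrite W_base // -(W_bot e2 bx) -(W_top _ d2); last by move=> i hi; apply: tx.
  congr W; rewrite /d2; lia.
rewrite E1 E2; congr W; rewrite /d1 /d2 /e1 /e2; lia.
Qed.


Lemma eqLS_refl x : x ~= x. Proof. by []. Qed.
Lemma eqLS_sym x y : x ~= y -> y ~= x. Proof. by move=> h n; rewrite h. Qed.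
Lemma eqLS_trans x y z : x ~= y -> y ~= z -> x ~= z. Proof. by move=> h1 h2 n; rewrite h1 h2. Qed.

Lemma eqLS_fc x y : top x = top y -> fc x =1 fc y -> x ~= y.
Proof. by move=> ht hf n; rewrite /coef ht hf. Qed.

Definition tr (f : nat -> rat) K : {poly rat} := \poly_(i < K.+1) f i.

Lemma convE (f g : nat -> rat) k K : (k <= K)%N ->
  \sum_(j < k.+1) f j * g (k - j)%N = (tr f K * tr g K)`_k.
Proof.
move=> hk; rewrite coefM; apply: eq_bigr => j _.
have hj := ltn_ord j.
rewrite /tr !coef_poly ifT; last by lia.
by rewrite ifT //; lia.
Qed.

Lemma coefM_dep (P P' Q : {poly rat}) k :
  (forall j, (j <= k)%N -> P`_j = P'`_j) -> (P * Q)`_k = (P' * Q)`_k.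
Proof.
move=> h; rewrite !coefM; apply: eq_bigr => j _; rewrite h //.
by have := ltn_ord j; lia.
Qed.

Lemma LSmulC x y : LSmul x y ~= LSmul y x.
Proof.
apply: eqLS_fc => [|k] /=; first by rewrite addrC.
by rewrite !(convE _ _ (leqnn k)) mulrC.
Qed.

Lemma LSmulA x y z : LSmul x (LSmul y z) ~= LSmul (LSmul x y) z.
Proof.
apply: eqLS_fc => [|k] /=; first by rewrite addrA.
rewrite (convE (fc x) (fun j => \sum_(j0 < j.+1) fc y j0 * fc z (j - j0)) (leqnn k)).
rewrite (convE (fun j => \sum_(j0 < j.+1) fc x j0 * fc y (j - j0)) _ (leqnn k)).
set A := tr (fc x) k; set B := tr (fc y) k; set C := tr (fc z) k.
set G := tr _ k; set F := tr _ k.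
have -> : (A * G)`_k = ((B * C) * A)`_k.
  rewrite mulrC; apply: coefM_dep => j hj.
  by rewrite /G /tr coef_poly ifT ?(convE _ _ hj) //; lia.
have -> : (F * C)`_k = ((A * B) * C)`_k.
  apply: coefM_dep => j hj.
  by rewrite /F /tr coef_poly ifT ?(convE _ _ hj) //; lia.
by rewrite [in LHS]mulrC mulrA.
Qed.

Lemma LSmul_eql x x' y : x ~= x' -> LSmul x y ~= LSmul x' y.
Proof.
move=> e n.
pose h : int := (absz (top x))%:Z + (absz (top x'))%:Z.
pose N := (absz (h - n + top y)%R).+1.
have Ht z : top z <= h -> forall i, h < i -> term z y n i = 0.
  by move=> hz i hi; rewrite /term coef_gt ?mul0r //; lia.
have Hb z : forall i, i <= h - N%:Z -> term z y n i = 0.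
  by move=> i hi; rewrite /term (@coef_gt y) ?mulr0 //; rewrite /N; lia.
rewrite (coefLSM (Ht x _) (@Hb x)); last by rewrite /h; lia.
rewrite (coefLSM (Ht x' _) (@Hb x')); last by rewrite /h; lia.
by apply: eq_bigr => j _; rewrite /term e.
Qed.

Lemma LSmul_eqr x y y' : y ~= y' -> LSmul x y ~= LSmul x y'.
Proof.
move=> e; apply: eqLS_trans (LSmulC _ _) _.
apply: eqLS_trans (LSmul_eql _ e) (LSmulC _ _).
Qed.

Lemma LSmul1 x : LSmul LSone x ~= x.
Proof.
move=> n; rewrite (@coefLSM _ _ n 0 1).
- by rewrite /W big_ord1 /term /= subr0 coefLS1 eqxx mul1r subr0.
- by move=> i hi; rewrite /term coefLS1; case: (i =P 0) => [e|]; [lia|rewrite mul0r].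
- by move=> i hi; rewrite /term coefLS1; case: (i =P 0) => [e|]; [lia|rewrite mul0r].
Qed.

Lemma LSmulDr x y z : LSmul x (LSadd y z) ~= LSadd (LSmul x y) (LSmul x z).
Proof.
move=> n; rewrite coefLSD.
pose h := top x.
pose N := (absz (top x - n)%R + absz (top y) + absz (top z)).+1.
have Ht w : forall i, h < i -> term x w n i = 0.
  by move=> i hi; rewrite /term coef_gt ?mul0r.
have Hb w : top w <= (absz (top y))%:Z + (absz (top z))%:Z ->
    forall i, i <= h - N%:Z -> term x w n i = 0.
  by move=> hw i hi; rewrite /term (@coef_gt w) ?mulr0 //; rewrite /N /h in hi; lia.
have Hbyz : forall i, i <= h - N%:Z -> term x (LSadd y z) n i = 0.
  move=> i hi; rewrite /term coefLSD (@coef_gt y) ?(@coef_gt z) ?addr0 ?mulr0 //;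
  rewrite /N /h in hi; lia.
rewrite (coefLSM (Ht _) Hbyz) (coefLSM (Ht _) (Hb y _)) ?(coefLSM (Ht _) (Hb z _)); try lia.
rewrite /W -big_split /=; apply: eq_bigr => j _.
by rewrite /term coefLSD mulrDr.
Qed.

Lemma LSaddC x y : LSadd x y ~= LSadd y x.
Proof. by move=> n; rewrite !coefLSD addrC. Qed.
Lemma LSaddA x y z : LSadd x (LSadd y z) ~= LSadd (LSadd x y) z.
Proof. by move=> n; rewrite !coefLSD addrA. Qed.
Lemma LSadd0 x : LSadd LSzero x ~= x.
Proof. by move=> n; rewrite !coefLSD coefLS0 add0r. Qed.
Lemma LSaddN x : LSadd x (LSopp x) ~= LSzero.
Proof. by move=> n; rewrite !coefLSD coefLSN coefLS0 subrr. Qed.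
Lemma LSadd_eq x x' y y' : x ~= x' -> y ~= y' -> LSadd x y ~= LSadd x' y'.
Proof. by move=> e1 e2 n; rewrite !coefLSD e1 e2. Qed.
Lemma LSopp_eq x x' : x ~= x' -> LSopp x ~= LSopp x'.
Proof. by move=> e n; rewrite !coefLSN e. Qed.
Lemma LSmul_eq x x' y y' : x ~= x' -> y ~= y' -> LSmul x y ~= LSmul x' y'.
Proof. by move=> e1 e2; apply: eqLS_trans (LSmul_eql _ e1) (LSmul_eqr _ e2). Qed.

Lemma LSsetoid : Setoid.Setoid_Theory LS eqLS.
Proof. split; [exact: eqLS_refl|exact: eqLS_sym|exact: eqLS_trans]. Qed.

Add Parametric Relation : LS eqLS
  reflexivity proved by eqLS_refl
  symmetry proved by eqLS_sym
  transitivity proved by eqLS_trans as eqLS_rel.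

#[global] Instance LSadd_mor : Morphisms.Proper (Morphisms.respectful eqLS (Morphisms.respectful eqLS eqLS)) LSadd.
Proof. by move=> x x' e1 y y' e2; apply: LSadd_eq. Qed.
#[global] Instance LSmul_mor : Morphisms.Proper (Morphisms.respectful eqLS (Morphisms.respectful eqLS eqLS)) LSmul.
Proof. by move=> x x' e1 y y' e2; apply: LSmul_eq. Qed.
#[global] Instance LSopp_mor : Morphisms.Proper (Morphisms.respectful eqLS eqLS) LSopp.
Proof. by move=> x x' e1; apply: LSopp_eq. Qed.
#[global] Instance LSsub_mor : Morphisms.Proper (Morphisms.respectful eqLS (Morphisms.respectful eqLS eqLS)) LSsub.
Proof. by move=> x x' e1 y y' e2; apply: LSadd_eq => //; apply: LSopp_eq. Qed.
#[global] Instance coef_mor : Morphisms.Proper (Morphisms.respectful eqLS (Morphisms.respectful eq eq)) coef.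
Proof. by move=> x x' e1 n n' ->. Qed.

Lemma LSrt : Ring_theory.ring_theory LSzero LSone LSadd LSmul LSsub LSopp eqLS.
Proof.
split.
- exact: LSadd0.
- exact: LSaddC.
- exact: LSaddA.
- exact: LSmul1.
- exact: LSmulC.
- exact: LSmulA.
- move=> x y z. apply: eqLS_trans (LSmulC _ _) _.
  apply: eqLS_trans (LSmulDr _ _ _) _.
  by apply: LSadd_eq; apply: LSmulC.
- by [].
- exact: LSaddN.
Qed.

Lemma LSext : Ring_theory.ring_eq_ext LSadd LSmul LSopp eqLS.
Proof. split; [exact: LSadd_mor|exact: LSmul_mor|exact: LSopp_mor]. Qed.

From Stdlib Require Import Ring_tac.
Add Ring LSring : LSrt (setoid LSsetoid LSext).




Lemma LSpolyD p q : LSpoly (p + q) ~= LSadd (LSpoly p) (LSpoly q).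
Proof. by move=> n; rewrite coefLSD !coefLSP; case: ifP; rewrite ?coefD ?addr0. Qed.

Lemma LSpolyN p : LSpoly (- p) ~= LSopp (LSpoly p).
Proof. by move=> n; rewrite coefLSN !coefLSP; case: ifP; rewrite ?coefN ?oppr0. Qed.

Lemma LSpolyB p q : LSpoly (p - q) ~= LSsub (LSpoly p) (LSpoly q).
Proof. by move=> n; rewrite coefLSB !coefLSP; case: ifP; rewrite ?coefB ?subr0. Qed.

Lemma LSpolyM p q : LSpoly (p * q) ~= LSmul (LSpoly p) (LSpoly q).
Proof.
move=> n; rewrite coefLSP; case: ifP => hn.
  rewrite (@coefLSM _ _ n n (absz n).+1).
  - rewrite coefMr /W; apply: eq_bigr => j _; have hj := ltn_ord j.
    rewrite /term !coefLSP ifT; last by lia.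
    rewrite ifT; last by lia.
    by congr (_`_ _ * _`_ _); lia.
  - by move=> i hi; rewrite /term (@coefLSP q) ifF ?mulr0 //; apply/negbTE; lia.
  - by move=> i hi; rewrite /term (@coefLSP p) ifF ?mul0r //; apply/negbTE; lia.
rewrite (@coefLSM _ _ n n 0) /W ?big_ord0 //.
- move=> i hi; rewrite /term !coefLSP; case: ifP => h1; last by rewrite mul0r.
  by rewrite ifF ?mulr0 //; apply/negbTE; lia.
- by move=> i hi; rewrite /term (@coefLSP p) ifF ?mul0r //; apply/negbTE; lia.
Qed.

Definition le_deg x (D : int) := forall n, D < n -> coef x n = 0.
Definition isdeg x d := coef x d != 0 /\ le_deg x d.

Lemma le_deg_top x : le_deg x (top x).
Proof. by move=> n hn; rewrite coef_gt. Qed.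

Lemma le_deg_mono x D D' : le_deg x D -> D <= D' -> le_deg x D'.
Proof. by move=> h hD n hn; apply: h; lia. Qed.

Lemma le_deg_eq x y D : x ~= y -> le_deg x D -> le_deg y D.
Proof. by move=> e h n hn; rewrite -e h. Qed.

Lemma isdeg_eq x y d : x ~= y -> isdeg x d -> isdeg y d.
Proof. by move=> e [h1 h2]; split; [rewrite -e|apply: le_deg_eq h2]. Qed.

Lemma le_deg_add x y D : le_deg x D -> le_deg y D -> le_deg (LSadd x y) D.
Proof. by move=> h1 h2 n hn; rewrite coefLSD h1 ?h2 ?addr0. Qed.

Lemma le_deg_opp x D : le_deg x D -> le_deg (LSopp x) D.
Proof. by move=> h n hn; rewrite coefLSN h ?oppr0. Qed.

Lemma le_deg_sub x y D : le_deg x D -> le_deg y D -> le_deg (LSsub x y) D.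
Proof. by move=> h1 h2; apply: le_deg_add h1 (le_deg_opp h2). Qed.

Lemma le_deg_mul x y D E : le_deg x D -> le_deg y E -> le_deg (LSmul x y) (D + E).
Proof.
move=> h1 h2 n hn; rewrite (@coefLSM _ _ n D 0) /W ?big_ord0 //.
- by move=> i hi; rewrite /term h1 ?mul0r.
- by move=> i hi; rewrite /term h2 ?mulr0 //; lia.
Qed.

Lemma isdeg_mul x y d e : isdeg x d -> isdeg y e ->
  isdeg (LSmul x y) (d + e) /\ coef (LSmul x y) (d + e) = coef x d * coef y e.
Proof.
move=> [c1 h1] [c2 h2].
have E : coef (LSmul x y) (d + e) = coef x d * coef y e.
  rewrite (@coefLSM _ _ (d + e) d 1).
  - by rewrite /W big_ord1 /term /= subr0; congr (_ * coef y _); lia.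
  - by move=> i hi; rewrite /term h1 ?mul0r.
  - by move=> i hi; rewrite /term h2 ?mulr0 //; lia.
split => //; split; last exact: le_deg_mul.
by rewrite E mulf_neq0.
Qed.

Lemma isdeg_uniq x d d' : isdeg x d -> isdeg x d' -> d = d'.
Proof.
move=> [c1 h1] [c2 h2]; apply/eqP; rewrite eq_le; apply/andP; split.
  by rewrite leNgt; apply/negP => h; move: c1; rewrite h2.
by rewrite leNgt; apply/negP => h; move: c2; rewrite h1.
Qed.

Lemma isdeg_addl x y d : isdeg x d -> le_deg y (d - 1) ->
  isdeg (LSadd x y) d /\ coef (LSadd x y) d = coef x d.
Proof.
move=> [c1 h1] h2.
have E : coef (LSadd x y) d = coef x d by rewrite coefLSD h2 ?addr0 //; lia.
split => //; split; first by rewrite E.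
by apply: le_deg_add h1 (le_deg_mono h2 _); lia.
Qed.

Lemma isdeg_opp x d : isdeg x d -> isdeg (LSopp x) d /\ coef (LSopp x) d = - coef x d.
Proof. by move=> [c1 h1]; rewrite coefLSN; split => //; split; [rewrite coefLSN oppr_eq0|apply: le_deg_opp]. Qed.

Lemma eq0P x : x ~= LSzero <-> forall n, coef x n = 0.
Proof. by split => h n; rewrite h ?coefLS0. Qed.

Lemma le_deg_all x : (forall D, le_deg x D) -> x ~= LSzero.
Proof. by move=> h; apply/eq0P => n; apply: (h (n - 1)); lia. Qed.

Lemma isdeg_nz x d : isdeg x d -> ~ x ~= LSzero.
Proof. by move=> [c1 _] /eq0P h; move: c1; rewrite h eqxx. Qed.

Lemma exists_isdeg x : ~ x ~= LSzero -> exists d, isdeg x d.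
Proof.
move=> nz.
have [n hn] : exists n, coef x n != 0.
  apply: contrapT => hh; apply: nz; apply/eq0P => n.
  by apply/eqP; apply: contrapT => h; apply: hh; exists n; apply/negP.
have hnt : n <= top x by rewrite leNgt; apply/negP => h; move: hn; rewrite coef_gt ?eqxx.
pose P k := coef x (top x - k%:Z) != 0.
have exP : exists k, P k.
  by exists (absz (top x - n)%R); rewrite /P; have -> : top x - (absz (top x - n)%R)%:Z = n by lia.
pose k0 := ex_minn exP.
have Pk0 : P k0 by rewrite /k0; case: ex_minnP.
have mink k : P k -> (k0 <= k)%N by rewrite /k0; case: ex_minnP => m _ h /h.
exists (top x - k0%:Z); split => // m hm.
case: (lerP m (top x)) => hmt; last by rewrite coef_gt.
have hk : ~~ P (absz (top x - m)%R).
  by apply/negP => /mink; lia.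
move: hk; rewrite /P negbK; have -> : top x - (absz (top x - m)%R)%:Z = m by lia.
by move/eqP.
Qed.

Lemma leq_sz (s : nat) (n : int) : s%:Z - 1 < n -> 0 <= n -> (s <= `|n|)%N.
Proof. lia. Qed.

Lemma isdeg_poly p : p != 0 ->
  isdeg (LSpoly p) ((size p)%:Z - 1) /\ coef (LSpoly p) ((size p)%:Z - 1) = lead_coef p.
Proof.
move=> pn0; have sp : (0 < size p)%N by rewrite size_poly_gt0.
have E : coef (LSpoly p) ((size p)%:Z - 1) = lead_coef p.
  by rewrite coefLSP ifT; [rewrite /lead_coef; congr (_`_ _); lia|lia].
split => //; split; first by rewrite E lead_coef_eq0.
move=> n hn; rewrite coefLSP; case: ifP => // h0; rewrite nth_default //; exact: leq_sz.
Qed.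

Definition integral x := forall n, n < 0 -> coef x n = 0.

Lemma integral_poly p : integral (LSpoly p).
Proof. by move=> n hn; rewrite coefLSP ifF //; apply/negbTE; lia. Qed.

Lemma integral_add x y : integral x -> integral y -> integral (LSadd x y).
Proof. by move=> h1 h2 n hn; rewrite coefLSD h1 ?h2 ?addr0. Qed.

Lemma integral_opp x : integral x -> integral (LSopp x).
Proof. by move=> h n hn; rewrite coefLSN h ?oppr0. Qed.

Lemma integral_mul x y : integral x -> integral y -> integral (LSmul x y).
Proof.
move=> h1 h2 n hn; rewrite (@coefLSM _ _ n n 0) /W ?big_ord0 //.
- move=> i hi; rewrite /term; case: (ltrP i 0) => h; first by rewrite h1 ?mul0r.
  by rewrite h2 ?mulr0 //; lia.
- by move=> i hi; rewrite /term h1 ?mul0r //; lia.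
Qed.

Lemma integral_eq x y : x ~= y -> integral x -> integral y.
Proof. by move=> e h n hn; rewrite -e h. Qed.

Lemma integral_deg x d : integral x -> isdeg x d -> 0 <= d.
Proof. by move=> h [c _]; rewrite leNgt; apply/negP => hd; move: c; rewrite h ?eqxx. Qed.


(* ---------- strong recursion on rational sequences ---------- *)
Fixpoint sl (F : nat -> (nat -> rat) -> rat) n : seq rat :=
  if n is m.+1 then rcons (sl F m) (F n (nth 0 (sl F m))) else [:: F 0%N (fun _ => 0)].
Definition srec F n := nth 0 (sl F n) n.

Lemma size_sl F n : size (sl F n) = n.+1.
Proof. by elim: n => //= n IH; rewrite size_rcons IH. Qed.

Lemma sl_pre F n m j : (j <= n)%N -> (n <= m)%N -> nth 0 (sl F m) j = nth 0 (sl F n) j.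
Proof.
move=> hj; elim: m => [|m IH]; first by rewrite leqn0 => /eqP ->.
rewrite leq_eqVlt => /orP[/eqP -> //|hm] /=.
by rewrite nth_rcons size_sl ifT ?IH //; lia.
Qed.

Lemma srecE F : (forall n s s', (forall j, (j < n)%N -> s j = s' j) -> F n s = F n s') ->
  forall n, srec F n = F n (srec F).
Proof.
move=> loc [|n]; first by rewrite /srec /=; apply: loc.
rewrite /srec /= nth_rcons size_sl ltnn eqxx; apply: loc => j hj.
by rewrite (@sl_pre F j n j).
Qed.

Lemma inv_exists x : ~ x ~= LSzero -> exists y, LSmul x y ~= LSone.
Proof.
move=> /exists_isdeg [d [c0 hd]].
set c := coef x d.
pose a j := coef x (d - j%:Z).
pose F n (s : nat -> rat) := if n is n'.+1 then - c^-1 * \sum_(i < n) a i.+1 * s (n' - i)%N else c^-1.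
have loc : forall n s s', (forall j, (j < n)%N -> s j = s' j) -> F n s = F n s'.
  move=> [|n] s s' h //=; congr (_ * _); apply: eq_bigr => i _; rewrite h //.
  by have := ltn_ord i; lia.
pose Y := mkLS (- d) (srec F).
pose X := mkLS d a.
have eX : x ~= X.
  move=> n; rewrite {2}/coef /=; case: ifP => h; last by rewrite hd //; lia.
  by rewrite /a; congr coef; lia.
exists Y; apply: eqLS_trans (LSmul_eql _ eX) _.
have fcXY k : fc (LSmul X Y) k = (k == 0%N)%:R.
  rewrite /=; case: k => [|k].
    by rewrite big_ord1 /= srecE // /F /= /a subr0 mulfV.
  rewrite big_ord_recl /= srecE // /F /a subr0 mulrA mulrN mulfV // mulN1r.
  rewrite -/a -[X in - X + _](@eq_bigr _ _ _ _ _ _ (fun i : 'I_k.+1 => a i.+1 * srec F (k - i)%N)) ?addNr //.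
move=> n; rewrite coefLS1 /coef fcXY /= addrN.
case: ifP => h; first by congr (_%:R); apply/eqP/eqP; lia.
by case: (n =P 0) => //; lia.
Qed.

Lemma LSinvP x : ~ x ~= LSzero -> LSmul x (LSinv x) ~= LSone.
Proof.
move=> nz; rewrite /LSinv; apply: (epsilon_spec (inhabits LSzero) (fun y => LSmul x y ~= LSone)).
exact: inv_exists.
Qed.

Lemma LSone_nz : ~ LSone ~= LSzero.
Proof. by move/eq0P/(_ 0); rewrite coefLS1 eqxx. Qed.

Lemma isdeg_one : isdeg LSone 0 /\ coef LSone 0 = 1.
Proof.
split; last by rewrite coefLS1 eqxx.
split; first by rewrite coefLS1 eqxx oner_eq0.
by move=> n hn; rewrite coefLS1; case: (n =P 0) => //; lia.
Qed.

Lemma mul_eq0 x y : LSmul x y ~= LSzero -> x ~= LSzero \/ y ~= LSzero.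
Proof.
move=> h; case: (pselect (x ~= LSzero)) => hx; [by left|right].
apply: contrapT => hy.
have [d hd] := exists_isdeg hx; have [e he] := exists_isdeg hy.
have [hxy _] := isdeg_mul hd he.
exact: isdeg_nz hxy h.
Qed.

Lemma isdeg_inv x d : isdeg x d ->
  isdeg (LSinv x) (- d) /\ coef (LSinv x) (- d) = (coef x d)^-1.
Proof.
move=> hd; have nz := isdeg_nz hd.
have P := LSinvP nz.
have nzi : ~ LSinv x ~= LSzero.
  move=> h; apply: LSone_nz; setoid_rewrite <- P; setoid_rewrite h; ring.
have [e he] := exists_isdeg nzi.
have [hm cm] := isdeg_mul hd he.
have hm' := isdeg_eq P hm.
have e0 := isdeg_uniq hm' (proj1 isdeg_one).
have -> : - d = e by lia.
split => //.
have := cm; rewrite P e0 (proj2 isdeg_one) => /esym h1.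
have cd : coef x d != 0 by case: hd.
by apply: (mulfI cd); rewrite mulfV // -h1 -e0.
Qed.


Lemma LSinv_eq x x' : x ~= x' -> ~ x ~= LSzero -> LSinv x ~= LSinv x'.
Proof.
move=> e nz; have nz' : ~ x' ~= LSzero by move=> h; apply: nz; apply: eqLS_trans e h.
have P := LSinvP nz; have P' := LSinvP nz'.
have h1 : LSinv x ~= LSmul (LSmul x' (LSinv x')) (LSinv x) by setoid_rewrite P'; ring.
have h2 : LSmul (LSmul x' (LSinv x')) (LSinv x) ~= LSmul (LSmul x (LSinv x')) (LSinv x).
  by apply: LSmul_eql; apply: LSmul_eql; apply: eqLS_sym.
have h3 : LSmul (LSmul x (LSinv x')) (LSinv x) ~= LSmul (LSmul x (LSinv x)) (LSinv x') by ring.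
have h4 : LSmul (LSmul x (LSinv x)) (LSinv x') ~= LSinv x' by setoid_rewrite P; ring.
exact: eqLS_trans h1 (eqLS_trans h2 (eqLS_trans h3 h4)).
Qed.

Lemma deg_le x D : (deg x <= (D%:~R)%:E)%E <-> le_deg x D.
Proof.
split.
  move=> h n hn; apply/eqP; apply: contrapT => /negP hc.
  have : ((n%:~R : RR)%:E <= deg x)%E by apply: ereal_sup_ubound; exists n.
  move=> /le_trans /(_ h); rewrite lee_fin ler_int; lia.
move=> h; apply: ge_ereal_sup => _ [n /= hn <-].
rewrite lee_fin ler_int leNgt; apply/negP => hl; move: hn; rewrite h ?eqxx //.
Qed.

Lemma deg_isdeg x d : isdeg x d -> deg x = (d%:~R)%:E.
Proof.
move=> [c h]; apply/eqP; rewrite eq_le; apply/andP; split; first exact/deg_le.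
by apply: ereal_sup_ubound; exists d.
Qed.

Lemma deg_zero x : x ~= LSzero -> deg x = -oo%E.
Proof.
move=> /eq0P h; apply/eqP; rewrite -leeNy_eq; apply: ge_ereal_sup => y [n hn <-].
by move: hn; rewrite /= h eqxx.
Qed.

Definition posdeg x := exists d, 1 <= d /\ isdeg x d.
Definition cfhyp (c : nat -> LS) := forall j, (0 < j)%N -> posdeg (c j).

Lemma cfhyp_shift c : cfhyp c -> cfhyp (fun k => c k.+1).
Proof. by move=> h j hj; apply: h. Qed.

Lemma cfin_deg n : forall c d0, cfhyp c -> isdeg (c 0%N) d0 -> 1 <= d0 -> isdeg (cfin c n) d0.
Proof.
elim: n => [|n IH] c d0 hc h0 hd0 //=.
have [d1 [hd1 i1]] := hc 1%N isT.
have := IH (fun k => c k.+1) d1 (cfhyp_shift hc) i1 hd1 => /isdeg_inv [hi _].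
have [] := isdeg_addl h0 (le_deg_mono (proj2 hi) _); first by lia.
done.
Qed.

Lemma cfin_small c n : cfhyp c -> c 0%N ~= LSzero -> (0 < n)%N -> le_deg (cfin c n) (-1).
Proof.
case: n => [|n] // hc h0 _ /=.
have [d1 [hd1 i1]] := hc 1%N isT.
have := cfin_deg n (cfhyp_shift hc) i1 hd1 => /isdeg_inv [hi _].
apply: le_deg_add; first by move=> m _; rewrite h0 coefLS0.
by apply: le_deg_mono (proj2 hi) _; lia.
Qed.

Lemma cfin_top c n : cfhyp c -> le_deg (cfin c n) (Num.max (top (c 0%N)) 0).
Proof.
case: n => [|n] hc /=.
  by apply: (@le_deg_mono _ (top (c 0%N))); [apply: le_deg_top|rewrite le_max lexx].
have [d1 [hd1 i1]] := hc 1%N isT.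
have := cfin_deg n (cfhyp_shift hc) i1 hd1 => /isdeg_inv [hi _].
apply: le_deg_add; first by apply: (@le_deg_mono _ (top (c 0%N))); [apply: le_deg_top|rewrite le_max lexx].
by apply: le_deg_mono (proj2 hi) _; rewrite le_max; apply/orP; right; lia.
Qed.

Lemma inv_diff u u' : ~ u ~= LSzero -> ~ u' ~= LSzero ->
  LSsub (LSinv u') (LSinv u) ~= LSmul (LSsub u u') (LSmul (LSinv u) (LSinv u')).
Proof.
move=> nz nz'; have P := LSinvP nz; have P' := LSinvP nz'.
have -> : LSmul (LSsub u u') (LSmul (LSinv u) (LSinv u')) ~=
  LSsub (LSmul (LSmul u (LSinv u)) (LSinv u')) (LSmul (LSmul u' (LSinv u')) (LSinv u)) by ring.
by setoid_rewrite P; setoid_rewrite P'; ring.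
Qed.

Lemma cfin_cauchy n : forall c, cfhyp c ->
  le_deg (LSsub (cfin c n.+1) (cfin c n)) (- (2 * n%:Z + 1)).
Proof.
elim: n => [|n IH] c hc.
  have [d1 [hd1 i1]] := hc 1%N isT.
  have [hi _] := isdeg_inv i1.
  apply: le_deg_eq; last by apply: le_deg_mono (proj2 hi) _; lia.
  rewrite /=; ring.
have [d1 [hd1 i1]] := hc 1%N isT.
set c' := fun k => c k.+1.
have hu := cfin_deg n (cfhyp_shift hc) i1 hd1.
have hu' := cfin_deg n.+1 (cfhyp_shift hc) i1 hd1.
have [hi _] := isdeg_inv hu; have [hi' _] := isdeg_inv hu'.
have E : LSsub (cfin c n.+2) (cfin c n.+1) ~=
  LSmul (LSsub (cfin c' n) (cfin c' n.+1)) (LSmul (LSinv (cfin c' n)) (LSinv (cfin c' n.+1))).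
  rewrite -(inv_diff (isdeg_nz hu) (isdeg_nz hu')) /=; ring.
apply: le_deg_eq (eqLS_sym E) _.
have D1 : le_deg (LSsub (cfin c' n) (cfin c' n.+1)) (- (2 * n%:Z + 1)).
  apply: (le_deg_eq _ (le_deg_opp (IH c' (cfhyp_shift hc)))); ring.
have := le_deg_mul D1 (le_deg_mul (proj2 hi) (proj2 hi')).
by move/le_deg_mono; apply; lia.
Qed.

Lemma le_deg_zero x D : x ~= LSzero -> le_deg x D.
Proof. by move=> h n _; rewrite h coefLS0. Qed.

Lemma cfin_cauchy2 c n m : cfhyp c -> (n <= m)%N ->
  le_deg (LSsub (cfin c m) (cfin c n)) (- (2 * n%:Z + 1)).
Proof.
move=> hc; elim: m => [|m IH].
  by rewrite leqn0 => /eqP ->; apply: le_deg_zero; ring.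
rewrite leq_eqVlt => /orP[/eqP <-|hm].
  by apply: le_deg_zero; ring.
have h1 := @cfin_cauchy m c hc.
have h2 := IH hm.
have E : LSsub (cfin c m.+1) (cfin c n) ~=
  LSadd (LSsub (cfin c m.+1) (cfin c m)) (LSsub (cfin c m) (cfin c n)) by ring.
apply: le_deg_eq (eqLS_sym E) (le_deg_add (le_deg_mono h1 _) h2); lia.
Qed.

Lemma cf_limit_ex c : cfhyp c -> exists L, cf_limit c L.
Proof.
move=> hc; set T0 := Num.max (top (c 0%N)) 0.
have T0p : 0 <= T0 by rewrite le_max lexx orbT.
exists (mkLS T0 (fun k => coef (cfin c k) (T0 - k%:Z))) => M.
exists (absz M) => n hn m hm.
case: (lerP m T0) => hmT; last first.
  by rewrite (cfin_top n hc) // coef_gt.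
rewrite {2}/coef /= hmT.
set k := absz (T0 - m)%R.
have -> : T0 - k%:Z = m by rewrite /k; lia.
case: (leqP n k) => hnk.
  have := cfin_cauchy2 hc hnk => /(_ m); rewrite coefLSB => h.
  by apply/eqP; rewrite eq_sym -subr_eq0 h //; lia.
have := cfin_cauchy2 hc (ltnW hnk) => /(_ m); rewrite coefLSB => h.
by apply/eqP; rewrite -subr_eq0 h //; rewrite /k; lia.
Qed.

Lemma cf_spec c : cfhyp c -> cf_limit c (cf c).
Proof. by move=> hc; rewrite /cf; apply: epsilon_spec; apply: cf_limit_ex. Qed.

Lemma cf_isdeg c d0 : cfhyp c -> isdeg (c 0%N) d0 -> 1 <= d0 -> isdeg (cf c) d0.
Proof.
move=> hc h0 hd0; have [n0 hn0] := cf_spec hc (d0 - 1).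
have [i1 i2] := cfin_deg n0 hc h0 hd0.
split; first by rewrite -(hn0 n0) //; lia.
by move=> m hm; rewrite -(hn0 n0) ?i2 //; lia.
Qed.

Lemma cf_small c : cfhyp c -> c 0%N ~= LSzero -> le_deg (cf c) (-1).
Proof.
move=> hc h0; have [n0 hn0] := cf_spec hc (-1).
by move=> m hm; rewrite -(hn0 n0.+1) // (cfin_small hc h0).
Qed.

Lemma posdeg_poly (p : {poly rat}) : (1 < size p)%N -> posdeg (LSpoly p).
Proof.
move=> hs; have pn0 : p != 0 by rewrite -size_poly_gt0; lia.
exists ((size p)%:Z - 1); split; [lia|exact: (proj1 (isdeg_poly pn0))].
Qed.

Lemma lambda_isdeg (g : int -> {poly rat}) i : (forall j, (1 < size (g j))%N) ->
  isdeg (lambda g i) ((size (g i))%:Z - 1).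
Proof.
move=> hg; rewrite /lambda.
have hc1 : cfhyp (fun n => LSpoly (g (i + n%:Z))) by move=> j _; apply: posdeg_poly.
have hc2 : cfhyp (fun n => if n == 0%N then LSzero else LSpoly (g (i - n%:Z))).
  by move=> [|j] // _; apply: posdeg_poly.
have pn0 : g i != 0 by rewrite -size_poly_gt0; have := hg i; lia.
have h0 : isdeg (LSpoly (g (i + (0%N)%:Z))) ((size (g i))%:Z - 1).
  by rewrite addr0; exact: (proj1 (isdeg_poly pn0)).
have hd : 1 <= (size (g i))%:Z - 1 by have := hg i; lia.
have := cf_isdeg hc1 h0 hd => h1.
have := cf_small hc2 (eqLS_refl _) => h2.
by have [] := isdeg_addl h1 (le_deg_mono h2 _); first lia.
Qed.

Lemma deg_lambda (g : int -> {poly rat}) i : (forall j, (1 < size (g j))%N) ->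
  deg (lambda g i) = ((((size (g i))%:Z - 1)%:~R : RR))%:E.
Proof. by move=> hg; apply: deg_isdeg; apply: lambda_isdeg. Qed.

Definition Sset : set (\bar RR) :=
  fun x => x = +oo%E \/ exists k : int, 0 < k /\ x = ((k%:~R : RR))%:E.

Definition intlike (x : \bar RR) := x = +oo%E \/ exists k : int, x = ((k%:~R : RR))%:E.

Lemma all_int_pinfty (y : \bar RR) : (forall j : int, (((j%:~R : RR))%:E <= y)%E) -> y = +oo%E.
Proof.
case: y => [r| |] // h.
  by have := h (Num.floor r + 1); rewrite lee_fin leNgt floorD1_gt.
by have := h 0.
Qed.

Lemma sup_Sset (X : set (\bar RR)) :
  (forall x, X x -> intlike x) -> (exists x, X x /\ Sset x) -> Sset (ereal_sup X).
Proof.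
move=> hX [x0 [Xx0 Sx0]].
case: (pselect (X +oo%E)) => hy; first by left; apply: ereal_supy.
have {}x0pos : exists k : int, 0 < k /\ X ((k%:~R : RR))%:E.
  by case: Sx0 => [e|[k [hk e]]]; [move: Xx0; rewrite e|exists k; rewrite -e].
case: (pselect (exists B : int, forall k : int, X ((k%:~R : RR))%:E -> k <= B)) => hB.
  case: hB => B hB; case: x0pos => k0 [hk0 Xk0].
  pose P (n : nat) := `[< X (((n%:Z)%:~R : RR))%:E >].
  have exP : exists n, P n.
    by exists (absz k0); apply/asboolP; have -> : (absz k0)%:Z = k0 by lia.
  have bdP : forall n, P n -> (n <= absz B)%N.
    by move=> n /asboolP /hB; lia.
  pose m := ex_maxn exP bdP.
  have Pm : P m by rewrite /m; case: ex_maxnP.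
  have maxm n : P n -> (n <= m)%N by rewrite /m; case: ex_maxnP => i _ h /h.
  have k0m : (absz k0 <= m)%N.
    by apply: maxm; apply/asboolP; have -> : (absz k0)%:Z = k0 by lia.
  right; exists (m%:Z); split; first by lia.
  apply/eqP; rewrite eq_le; apply/andP; split.
    apply: ge_ereal_sup => y Xy; case: (hX _ Xy) => [e|[k e]]; first by move: Xy; rewrite e.
    rewrite e lee_fin ler_int; case: (lerP k 0) => hk; first by lia.
    have kk : (absz k)%:Z = k by lia.
    have : P (absz k) by apply/asboolP; rewrite kk -e.
    by move/maxm; lia.
  by apply: ereal_sup_ubound; move/asboolP: Pm.
left; apply: all_int_pinfty => j.
have : ~ (forall k : int, X ((k%:~R : RR))%:E -> k <= j) by move=> h; apply: hB; exists j.
move=> /existsNP [k] /not_implyP [Xk hk].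
apply: le_trans (ereal_sup_ubound Xk); rewrite lee_fin ler_int; lia.
Qed.

Lemma inf_Sset (X : set (\bar RR)) : (exists x, X x) -> (forall x, X x -> Sset x) -> Sset (ereal_inf X).
Proof.
move=> [x0 Xx0] hX.
case: (pselect (exists k : int, X ((k%:~R : RR))%:E)) => hk.
  case: hk => k0 Xk0.
  have pos k : X ((k%:~R : RR))%:E -> 0 < k.
    move=> /hX [//|[k' [hk' /eqP]]]; rewrite eqe eqr_int => /eqP ->//.
  pose Q (n : nat) := `[< X (((n%:Z)%:~R : RR))%:E >].
  have exQ : exists n, Q n.
    by exists (absz k0); apply/asboolP; have -> : (absz k0)%:Z = k0 by have := pos _ Xk0; lia.
  pose m := ex_minn exQ.
  have Qm : Q m by rewrite /m; case: ex_minnP.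
  have minm n : Q n -> (m <= n)%N by rewrite /m; case: ex_minnP => i _ h /h.
  right; exists (m%:Z); split; first by apply: pos; move/asboolP: Qm.
  apply/eqP; rewrite eq_le; apply/andP; split.
    by apply: ereal_inf_lbound; move/asboolP: Qm.
  apply: le_ereal_inf_tmp => y Xy; case: (hX _ Xy) => [->|[k [hk e]]]; first exact: leey.
  rewrite e lee_fin ler_int.
  have kk : (absz k)%:Z = k by lia.
  have : Q (absz k) by apply/asboolP; rewrite kk -e.
  by move/minm; lia.
left; apply/eqP; rewrite -leye_eq; apply: le_ereal_inf_tmp => y Xy.
case: (hX _ Xy) => [->//|[k [_ e]]]; exfalso; apply: hk; exists k; by rewrite -e.
Qed.

Lemma limsup_Sset (u : nat -> \bar RR) : (forall n, Sset (u n)) -> Sset (limn_esup u).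
Proof.
move=> hu; rewrite limn_esup_lim.
have := @cvg_esups_inf _ u => /cvg_lim ->; last exact: ereal_hausdorff.
apply: inf_Sset; first by exists (esups u 0); exists 0%N.
move=> _ [n _ <-]; rewrite /esups /=.
apply: sup_Sset.
  move=> _ [k _ <-]; case: (hu k) => [->|[j [_ ->]]]; [by left|by right; exists j].
by exists (u n); split => //; exists n => /=.
Qed.


Lemma limsup_of_esups (u : nat -> \bar RR) a : (forall n, esups u n = a) -> limn_esup u = a.
Proof.
move=> h; rewrite limn_esup_lim.
have -> : esups u = fun _ => a by apply: funext => n; rewrite h.
by apply: cvg_lim; [exact: ereal_hausdorff|exact: cvg_cst].
Qed.

Lemma sz_pos (s : nat) : (1 < s)%N -> 0 < s%:Z - 1.
Proof. lia. Qed.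

Lemma maxe_Sset x y : Sset x -> Sset y -> Sset (maxe x y).
Proof. by move=> hx hy; rewrite /Order.max; case: ifP. Qed.

Lemma L_values_Sset : L_values = Sset.
Proof.
apply/seteqP; split.
  move=> _ [g /= hg <-].
  have hS i : Sset (deg (lambda g i)).
    rewrite deg_lambda //; right; exists ((size (g i))%:Z - 1); split => //.
    exact: sz_pos.
  by rewrite /LA; apply: maxe_Sset; apply: limsup_Sset => n; apply: hS.
move=> x [->|[k [hk ->]]].
  exists (fun i : int => 'X^(succn (absz i)) : {poly rat}) => /=.
    by move=> i; rewrite size_polyXn.
  rewrite /LA.
  have -> : limn_esup (fun n : nat => deg (lambda (fun i : int => 'X^(succn (absz i))) n%:Z)) = +oo%E.
    apply: limsup_of_esups => n; apply: all_int_pinfty => j.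
    apply: le_trans (ereal_sup_ubound _); last first.
      by exists (n + absz j)%N => //=; rewrite leq_addr.
rewrite deg_lambda; last by move=> i; rewrite size_polyXn.
    by rewrite size_polyXn lee_fin ler_int; lia.
  by rewrite /Order.max; case: ifP => //; rewrite ltNge leey.
exists (fun i : int => 'X^(absz k) : {poly rat}) => /=.
  by move=> i; rewrite size_polyXn; lia.
rewrite /LA.
have E u : (forall n, u n = (k%:~R : RR)%:E) -> limn_esup u = (k%:~R : RR)%:E.
  move=> hu; apply: limsup_of_esups => n; apply/eqP; rewrite eq_le; apply/andP; split.
    by apply: ge_ereal_sup => _ [m _ <-]; rewrite hu.
  by rewrite -(hu n); apply: ereal_sup_ubound; exists n => /=.
rewrite !E ?maxxx //.
all: move=> n; rewrite deg_lambda; last (by move=> i; rewrite size_polyXn; lia).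
all: by rewrite size_polyXn; congr (_%:E); congr (_%:~R); lia.
Qed.

Local Open Scope classical_set_scope.

Definition ratf (pq : {poly rat} * {poly rat}) := LSdiv (LSpoly pq.1) (LSpoly pq.2).
Definition bnd (q : {poly rat}) (k : int) : int := - 2 * ((size q)%:Z - 1) - k.

Definition pairset a k : set ({poly rat} * {poly rat}) :=
  fun pq => pq.2 != 0 /\ le_deg (LSsub a (ratf pq)) (bnd pq.2 k).

Lemma approx_setE a k : approx_set a k = (fun pq => coef (ratf pq)) @` (pairset a k).
Proof.
rewrite /approx_set /pairset; apply/seteqP; split => _ [pq [h1 h2] <-]; exists pq => //.
  by split => //; apply/deg_le.
by split => //; apply/deg_le.
Qed.

Lemma approx_mono a k k' : k' <= k -> (approx_set a k `<=` approx_set a k')%classic.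
Proof.
move=> hk; rewrite !approx_setE => _ [pq [h1 h2] <-]; exists pq => //; split => //.
by apply: le_deg_mono h2 _; rewrite /bnd; lia.
Qed.

Lemma LSsub_coef_eq a x y d : (forall n, coef x n = coef y n) -> isdeg (LSsub a x) d -> isdeg (LSsub a y) d.
Proof. by move=> h; apply: isdeg_eq => n; rewrite !coefLSB h. Qed.

Lemma approx_inf a k :
  (forall B : int, exists pqd : ({poly rat} * {poly rat}) * int,
     pairset a k pqd.1 /\ isdeg (LSsub a (ratf pqd.1)) pqd.2 /\ pqd.2 < B) ->
  infinite_set (approx_set a k).
Proof.
move=> /choice [f hf].
pose b := fix b n := if n is n'.+1 then (f (b n')).2 else 0.
pose s n := (f (b n)).1.
have hs n : pairset a k (s n) /\ isdeg (LSsub a (ratf (s n))) (b n.+1) /\ b n.+1 < b n.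
  by have := hf (b n).
have dec n m : (n < m)%N -> b m < b n.
  elim: m => // m IH; rewrite ltnS leq_eqVlt => /orP[/eqP ->|h].
    by case: (hs n) => _ [_]; case: (hs m) => _ [_].
  have [_ [_ h2]] := hs m; have := IH h; lia.
pose F n := coef (ratf (s n)).
have Finj : {in [set: nat] &, injective F}.
  move=> n m _ _ e.
  have hn := (proj1 (proj2 (hs n))); have hm := (proj1 (proj2 (hs m))).
  have := LSsub_coef_eq (fun t => f_equal (fun g => g t) e) hn => hn'.
  have := isdeg_uniq hn' hm => eb.
  apply/eqP; case: (ltngtP n m) => // h.
    by have := dec _ _ (ltnSn n); have := dec n.+1 m.+1 h; lia.
  by have := dec _ _ (ltnSn m); have := dec m.+1 n.+1 h; lia.
apply/infiniteP.
have [_ h2] := (card_eqPle _ _).1 (inj_card_eq Finj).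
apply: card_le_trans h2 _; apply: subset_card_le => _ [n _ <-].
by rewrite approx_setE; exists (s n) => //; have [] := hs n.
Qed.

Lemma isdeg_le x d D : isdeg x d -> le_deg x D -> d <= D.
Proof. by move=> [c _] h; rewrite leNgt; apply/negP => hd; move: c; rewrite h ?eqxx. Qed.

Lemma poly_nz (p : {poly rat}) : p != 0 -> ~ LSpoly p ~= LSzero.
Proof. by move=> h; apply: isdeg_nz (proj1 (isdeg_poly h)). Qed.

Lemma ratf_sub_eq a p q : q != 0 ->
  LSmul (LSsub (LSmul (LSpoly q) a) (LSpoly p)) (LSinv (LSpoly q)) ~= LSsub a (ratf (p, q)).
Proof.
move=> hq; have PQ := LSinvP (poly_nz hq); rewrite /ratf /LSdiv /=.
have -> : LSmul (LSsub (LSmul (LSpoly q) a) (LSpoly p)) (LSinv (LSpoly q)) ~=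
  LSsub (LSmul a (LSmul (LSpoly q) (LSinv (LSpoly q)))) (LSmul (LSpoly p) (LSinv (LSpoly q))) by ring.
by setoid_rewrite PQ; ring.
Qed.

Lemma liou a r s p q : s != 0 -> q != 0 -> a ~= ratf (r, s) ->
  ~ LSsub a (ratf (p, q)) ~= LSzero ->
  exists d, isdeg (LSsub a (ratf (p, q))) d /\ - ((size s)%:Z - 1) - ((size q)%:Z - 1) <= d.
Proof.
move=> hs hq ea nz.
have PS := LSinvP (poly_nz hs); have PQ := LSinvP (poly_nz hq).
set N := LSsub (LSmul (LSpoly r) (LSpoly q)) (LSmul (LSpoly p) (LSpoly s)).
have E : LSsub a (ratf (p, q)) ~= LSmul N (LSmul (LSinv (LSpoly s)) (LSinv (LSpoly q))).
  apply: eqLS_trans (LSadd_eq ea (eqLS_refl _)) _; rewrite /ratf /LSdiv /= /N.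
  have -> : LSmul (LSsub (LSmul (LSpoly r) (LSpoly q)) (LSmul (LSpoly p) (LSpoly s)))
      (LSmul (LSinv (LSpoly s)) (LSinv (LSpoly q))) ~=
    LSsub (LSmul (LSmul (LSpoly r) (LSinv (LSpoly s))) (LSmul (LSpoly q) (LSinv (LSpoly q))))
          (LSmul (LSmul (LSpoly p) (LSinv (LSpoly q))) (LSmul (LSpoly s) (LSinv (LSpoly s)))) by ring.
  by setoid_rewrite PS; setoid_rewrite PQ; ring.
have nzN : ~ N ~= LSzero.
  by move=> h; apply: nz; apply: eqLS_trans E _; setoid_rewrite h; ring.
have intN : integral N.
  by apply: integral_add; [|apply: integral_opp]; apply: integral_mul; apply: integral_poly.
have [dN hN] := exists_isdeg nzN.
have dN0 := integral_deg intN hN.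
have [hiS _] := isdeg_inv (proj1 (isdeg_poly hs)).
have [hiQ _] := isdeg_inv (proj1 (isdeg_poly hq)).
have [hSQ _] := isdeg_mul hiS hiQ.
have [hNSQ _] := isdeg_mul hN hSQ.
exists (dN + (- ((size s)%:Z - 1) + - ((size q)%:Z - 1))); split.
  exact: isdeg_eq (eqLS_sym E) hNSQ.
lia.
Qed.

Lemma lia1 (x y z : int) : x + (y - 1) < - (z - 1) -> - (z - 1) - (y - 1) <= x -> False.
Proof. lia. Qed.

Lemma irr_crit a :
  (forall C : int, exists pq d, pq.2 != 0 /\ isdeg (LSsub a (ratf pq)) d /\ d + ((size pq.2)%:Z - 1) < C) ->
  ~ is_ratfun a.
Proof.
move=> H [r [s [hs ea]]].
have [[p q] [d [/= hq [hd hc]]]] := H (- ((size s)%:Z - 1)).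
have [d' [hd' hb]] := liou hs hq ea (isdeg_nz hd).
have e := isdeg_uniq hd hd'; move: hc hb; rewrite e; exact: lia1.
Qed.

Local Open Scope classical_set_scope.

Lemma kernel_vec (m n : nat) (A : 'M[rat]_(m, n)) : (n < m)%N ->
  exists v : 'rV[rat]_m, v != 0 /\ v *m A = 0.
Proof.
move=> hnm; set K := kermx A.
have Kn0 : K != 0.
  rewrite -mxrank_eq0 mxrank_ker; have := rank_leq_col A; lia.
have [i hi] : exists i, row i K != 0.
  apply: contrapT => hh; move/eqP: Kn0; apply; apply/row_matrixP => i.
  rewrite row0; apply/eqP; apply: contrapT => h; apply: hh; exists i; exact/negP.
by exists (row i K); split => //; rewrite -row_mul mulmx_ker row0.
Qed.

Lemma lia2 (s N : nat) : (s <= N.+1)%N -> - N%:Z - 1 + - (s%:Z - 1) <= - 2 * (s%:Z - 1) - 1.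
Proof. lia. Qed.

Lemma lia3 (s N : nat) (d B : int) : (0 < s)%N -> N = absz B ->
  d <= - N%:Z - 1 + - (s%:Z - 1) -> d < B.
Proof. lia. Qed.

Lemma dirichlet a : ~ is_ratfun a -> forall B : int,
  exists pqd : ({poly rat} * {poly rat}) * int,
    pairset a 1 pqd.1 /\ isdeg (LSsub a (ratf pqd.1)) pqd.2 /\ pqd.2 < B.
Proof.
move=> irr B; set N := absz B.
pose A : 'M[rat]_(N.+1, N) := \matrix_(j, m) coef a (- ((m : nat)%:Z + 1) - N%:Z + (j : nat)%:Z).
have [v [vn0 vA]] := kernel_vec A (ltnSn N).
pose q : {poly rat} := \poly_(l < N.+1) v 0 (inord (N - l)).
have qc (j : 'I_N.+1) : q`_(N - j) = v 0 j.
  have hj := ltn_ord j; rewrite coef_poly ifT; last by lia.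
  by congr (v 0 _); apply: val_inj; rewrite /= inordK; lia.
have hq : q != 0.
  apply/negP => /eqP q0; move/eqP: vn0; apply; apply/rowP => j.
  by rewrite mxE -qc q0 coef0.
have sq : (size q <= N.+1)%N by apply: size_poly.
set Qa := LSmul (LSpoly q) a.
have coefQa n : coef Qa n = \sum_(j < N.+1) v 0 j * coef a (n - N%:Z + (j : nat)%:Z).
  rewrite (@coefLSM _ _ n N%:Z N.+1).
  - rewrite /W; apply: eq_bigr => j _; have hj := ltn_ord j.
    rewrite /term coefLSP ifT; last by lia.
    have -> : absz (N%:Z - (j : nat)%:Z) = (N - j)%N by lia.
    by rewrite qc; congr (_ * coef a _); lia.
  - move=> i hi; rewrite /term coefLSP ifT; last by lia.
    by rewrite nth_default ?mul0r //; apply: leq_trans sq _; lia.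
  - by move=> i hi; rewrite /term coefLSP ifF ?mul0r //; apply/negbTE; lia.
have Qneg (m : nat) : (m < N)%N -> coef Qa (- (m%:Z + 1)) = 0.
  move=> hm; have := congr1 (fun M : 'M[rat]_(1, N) => M 0 (Ordinal hm)) vA; rewrite !mxE => <-.
  by rewrite coefQa; apply: eq_bigr => j _; rewrite mxE.
pose Kq := (absz (top Qa)).+1.
pose p : {poly rat} := \poly_(l < Kq) coef Qa l%:Z.
set X := LSsub Qa (LSpoly p).
have hX : le_deg X (- N%:Z - 1).
  move=> n hn; rewrite coefLSB coefLSP.
  case: ifP => h0.
    rewrite coef_poly; case: ifP => hK.
      by apply/eqP; rewrite subr_eq0; apply/eqP; congr coef; lia.
    by rewrite coef_gt ?subr0 //; move/negbT: hK; lia.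
  rewrite subr0; have -> : n = - ((absz n - 1)%N%:Z + 1) by move/negbT: h0; lia.
  by apply: Qneg; move/negbT: h0; lia.
have E := ratf_sub_eq a p hq.
have nz : ~ LSsub a (ratf (p, q)) ~= LSzero.
  move=> h; apply: irr; exists p, q; split => //.
  move=> n; have := h n; rewrite coefLSB coefLS0 => /eqP; rewrite subr_eq0 => /eqP ->.
  by [].
have [d hd] := exists_isdeg nz.
have [hiQ _] := isdeg_inv (proj1 (isdeg_poly hq)).
have hle : le_deg (LSsub a (ratf (p, q))) (- N%:Z - 1 + - ((size q)%:Z - 1)).
  exact: le_deg_eq E (le_deg_mul hX (proj2 hiQ)).
have dle := isdeg_le hd hle.
exists ((p, q), d); split; last first.
  split => //=; apply: (@lia3 (size q) N) => //; by rewrite size_poly_gt0.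
split => //=; apply: le_deg_mono hle _; rewrite /bnd.
by move: sq; exact: lia2.
Qed.

Local Open Scope classical_set_scope.

Definition isP3 (k : nat) : bool := has (fun m => 3 ^ m == k)%N (iota 0 k.+1).

Lemma isP3P k : reflect (exists m, k = 3 ^ m)%N (isP3 k).
Proof.
apply: (iffP hasP) => [[m _ /eqP <-]|[m ->]]; first by exists m.
exists m => //; rewrite mem_iota /= add0n ltnS.
by apply: ltnW; apply: ltn_expl.
Qed.

Definition aL := mkLS 0 (fun k => if isP3 k then 1 else 0).

Lemma coef_aL (n : int) : coef aL n = if (n <= 0) && isP3 (absz n) then 1 else 0.
Proof.
rewrite /coef /=; case: ifP => h //=.
by rewrite sub0r abszN.
Qed.

Lemma exp3_gap m j : (3 ^ m < 3 ^ j)%N -> (3 ^ j < 3 ^ m.+1)%N -> False.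
Proof. by rewrite !ltn_exp2l // => h1 h2; lia. Qed.

Lemma exp3_big m : (m < 3 ^ m)%N. Proof. exact: ltn_expl. Qed.

Lemma liou_approx (m : nat) : exists p q : {poly rat},
  q != 0 /\ (size q)%:Z - 1 = (3 ^ m)%N%:Z /\
  isdeg (LSsub aL (ratf (p, q))) (- (3 ^ m.+1)%N%:Z).
Proof.
set N := (3 ^ m)%N.
set q : {poly rat} := 'X^N.
set p : {poly rat} := \poly_(l < N.+1) coef aL (l%:Z - N%:Z).
exists p, q.
have hq : q != 0 by rewrite /q monic_neq0 ?monicXn.
have sq : (size q)%:Z - 1 = N%:Z by rewrite /q size_polyXn; lia.
split => //; split => //.
set Qa := LSmul (LSpoly q) aL.
have cQa n : coef Qa n = coef aL (n - N%:Z).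
  rewrite (@coefLSM _ _ n N%:Z 1).
  - by rewrite /W big_ord1 /term /= subr0 (coefLSP q) ?ifT // coefXn absz_nat eqxx mul1r.
  - move=> i hi; rewrite /term coefLSP; case: ifP => h; last by rewrite mul0r.
    by rewrite coefXn; case: (absz i =P N) => [e|_]; [lia|rewrite mul0r].
  - move=> i hi; rewrite /term coefLSP; case: ifP => h; last by rewrite mul0r.
    by rewrite coefXn; case: (absz i =P N) => [e|_]; [lia|rewrite mul0r].
set X := LSsub Qa (LSpoly p).
have cX n : coef X n = if n < 0 then coef aL (n - N%:Z) else 0.
  rewrite coefLSB coefLSP cQa; case: ifP => h0.
    rewrite ifF; last by apply/negbTE; lia.
    rewrite coef_poly; case: ifP => hl.
      by apply/eqP; rewrite subr_eq0; apply/eqP; congr coef; lia.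
    by rewrite coef_gt ?subr0 //=; move/negbT: hl; lia.
  by rewrite ifT ?subr0 //; move/negbT: h0; lia.
have hX : isdeg X (N%:Z - (3 ^ m.+1)%N%:Z).
  have N3 : (3 ^ m.+1 = 3 * N)%N by rewrite expnS.
  split.
    rewrite cX ifT; last by rewrite /N; lia.
    rewrite coef_aL ifT ?oner_eq0 //; apply/andP; split; first by lia.
    by apply/isP3P; exists m.+1; lia.
  move=> n hn; rewrite cX; case: ifP => // hn0.
  rewrite coef_aL; case: ifP => //; case/andP => _ /isP3P [j hj].
  exfalso; apply: (@exp3_gap m j); rewrite -hj; lia.
have [hiQ _] := isdeg_inv (proj1 (isdeg_poly hq)).
have [hXQ _] := isdeg_mul hX hiQ.
have E := ratf_sub_eq aL p hq.
have := isdeg_eq E hXQ; congr isdeg; rewrite sq; lia.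
Qed.

Lemma aL_irr : ~ is_ratfun aL.
Proof.
apply: irr_crit => C.
have [p [q [hq [sq hd]]]] := liou_approx (absz C).
exists (p, q); exists (- (3 ^ (absz C).+1)%N%:Z); split; first exact: hq.
split; first exact: hd.
rewrite /= sq expnS; have := exp3_big (absz C); lia.
Qed.

Lemma aL_inf k : infinite_set (approx_set aL k).
Proof.
apply: approx_inf => B.
set m := (absz B + absz k)%N.
have [p [q [hq [sq hd]]]] := liou_approx m.
exists ((p, q), - (3 ^ m.+1)%N%:Z); split; last split; [|exact: hd|].
  split; first exact: hq.
  apply: le_deg_mono (proj2 hd) _; rewrite /bnd /= sq expnS.
  have := exp3_big m; rewrite /m; lia.
rewrite /= expnS; have := exp3_big m; rewrite /m; lia.
Qed.

Local Open Scope classical_set_scope.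

Section Pell.
Variable k : nat.
Hypothesis k0 : (0 < k)%N.

Definition Dk : {poly rat} := 'X^(k + k) - 1.
Definition Zk := LSpoly Dk.
Definition Tk := LSpoly 'X^k.

Lemma coef_Zk (m : int) : coef Zk m =
  if 0 <= m then ((absz m == (k + k)%N)%:R - (absz m == 0%N)%:R) else 0.
Proof. by rewrite /Zk coefLSP /Dk coefB coefXn coef1. Qed.

Lemma le_deg_Zk : le_deg Zk (k + k)%N%:Z.
Proof.
move=> m hm; rewrite coef_Zk ifT; last by lia.
case: (absz m =P (k + k)%N) => [e|_]; first by lia.
by case: (absz m =P 0%N) => [e|_]; [lia|rewrite subr0].
Qed.

Lemma isdeg_Zk : isdeg Zk (k + k)%N%:Z /\ coef Zk (k + k)%N%:Z = 1.
Proof.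
have E : coef Zk (k + k)%N%:Z = 1.
  rewrite coef_Zk ?ifT // absz_nat eqxx; case: ((k + k)%N =P 0%N) => [e|_]; [lia|by rewrite subr0].
by split => //; split; [rewrite E oner_eq0|exact: le_deg_Zk].
Qed.

Lemma isdeg_Tk : isdeg Tk k%:Z /\ coef Tk k%:Z = 1.
Proof.
have hX : ('X^k : {poly rat}) != 0 by rewrite monic_neq0 ?monicXn.
have [h1 h2] := isdeg_poly hX.
rewrite size_polyXn lead_coefXn in h1 h2.
have -> : k%:Z = (k.+1)%:Z - 1 by lia.
by split.
Qed.

Lemma TT : LSmul Tk Tk ~= LSadd Zk LSone.
Proof.
apply: eqLS_trans (eqLS_sym (LSpolyM _ _)) _.
apply: eqLS_trans _ (LSpolyD _ _).
by rewrite /Dk subrK -exprD.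
Qed.

(* square root *)
Definition fZ (n : nat) := coef Zk ((k + k)%N%:Z - n%:Z).
Definition Fsq (n : nat) (s : nat -> rat) : rat :=
  if n is n'.+1 then (fZ n - \sum_(i < n') s i.+1 * s (n' - i)%N) / 2 else 1.
Definition ysq := srec Fsq.

Lemma Fsq_loc : forall n s s', (forall j, (j < n)%N -> s j = s' j) -> Fsq n s = Fsq n s'.
Proof.
move=> [|n] s s' h //=; congr ((_ - _) / 2); apply: eq_bigr => i _.
by have := ltn_ord i; move=> hi; rewrite !h //; lia.
Qed.

Lemma ysq0 : ysq 0 = 1. Proof. by rewrite /ysq srecE //; apply: Fsq_loc. Qed.

Lemma fZ0 : fZ 0 = 1.
Proof. by rewrite /fZ subr0; case: isdeg_Zk. Qed.

Lemma conv_ysq n : \sum_(j < n.+1) ysq j * ysq (n - j)%N = fZ n.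
Proof.
case: n => [|n]; first by rewrite big_ord1 /= ysq0 mul1r fZ0.
rewrite big_ord_recl big_ord_recr /= subn0 subnn ysq0 mul1r mulr1.
rewrite [ysq n.+1]/ysq srecE; last exact: Fsq_loc.
rewrite /Fsq -/ysq.
set S := \sum_(i < n) _.
set t := (fZ n.+1 - S) / 2.
have -> : t + (S + t) = t * 2 + S by rewrite mulr_natr mulr2n addrC -addrA (addrC S).
by rewrite /t divfK // subrK.
Qed.

Definition aP := mkLS k%:Z ysq.

Lemma aP_sq : LSmul aP aP ~= Zk.
Proof.
move=> m; rewrite {1}/coef /=.
have -> : (k%:Z + k%:Z) = (k + k)%N%:Z by lia.
case: ifP => hm; last by rewrite le_deg_Zk //; lia.
rewrite conv_ysq /fZ; congr coef; lia.
Qed.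

Lemma isdeg_aP : isdeg aP k%:Z /\ coef aP k%:Z = 1.
Proof.
have E : coef aP k%:Z = 1 by rewrite /coef /= lexx subrr /= ysq0.
by split => //; split; [rewrite E oner_eq0|exact: le_deg_top].
Qed.


Fixpoint pell (n : nat) : {poly rat} * {poly rat} :=
  if n is n'.+1 then ('X^k * (pell n').1 + Dk * (pell n').2, (pell n').1 + 'X^k * (pell n').2)
  else ('X^k, 1).

Lemma isdeg_add2 x y d : isdeg x d -> isdeg y d -> 0 < coef x d -> 0 < coef y d ->
  isdeg (LSadd x y) d /\ coef (LSadd x y) d = coef x d + coef y d.
Proof.
move=> [_ hx] [_ hy] cx cy; rewrite coefLSD; split => //; split; last exact: le_deg_add.
by rewrite coefLSD; apply/negP => /eqP h; have := addr_gt0 cx cy; rewrite h ltxx.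
Qed.

Lemma pell_props n :
  isdeg (LSpoly (pell n).1) (n.+1 * k)%N%:Z /\ 0 < coef (LSpoly (pell n).1) (n.+1 * k)%N%:Z /\
  isdeg (LSpoly (pell n).2) (n * k)%N%:Z /\ 0 < coef (LSpoly (pell n).2) (n * k)%N%:Z /\
  LSsub (LSmul Zk (LSmul (LSpoly (pell n).2) (LSpoly (pell n).2)))
        (LSmul (LSpoly (pell n).1) (LSpoly (pell n).1)) ~= LSopp LSone.
Proof.
have [iT cT] := isdeg_Tk; have [iZ cZ] := isdeg_Zk.
elim: n => [|n [iP [cP [iQ [cQ N]]]]].
  rewrite /= mul1n mul0n; split; first exact: iT.
  split; first by rewrite -/Tk cT.
  split; first exact: (proj1 isdeg_one).
  split; first by rewrite -/LSone (proj2 isdeg_one).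
  rewrite -/Tk -/LSone.
  have -> : LSsub (LSmul Zk (LSmul LSone LSone)) (LSmul Tk Tk) ~= LSsub Zk (LSmul Tk Tk) by ring.
  by setoid_rewrite TT; ring.
set P := LSpoly (pell n).1; set Q := LSpoly (pell n).2.
have EP : LSpoly (pell n.+1).1 ~= LSadd (LSmul Tk P) (LSmul Zk Q).
  rewrite /=; apply: eqLS_trans (LSpolyD _ _) _.
  by apply: LSadd_eq; apply: LSpolyM.
have EQ : LSpoly (pell n.+1).2 ~= LSadd P (LSmul Tk Q).
  rewrite /=; apply: eqLS_trans (LSpolyD _ _) _.
  by apply: LSadd_eq => //; apply: LSpolyM.
have [iTP cTP] := isdeg_mul iT iP.
have [iZQ cZQ] := isdeg_mul iZ iQ.
have [iTQ cTQ] := isdeg_mul iT iQ.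
have e1 : (k%:Z + (n.+1 * k)%N%:Z) = (n.+2 * k)%N%:Z by lia.
have e2 : ((k + k)%N%:Z + (n * k)%N%:Z) = (n.+2 * k)%N%:Z by lia.
have e3 : (k%:Z + (n * k)%N%:Z) = (n.+1 * k)%N%:Z by lia.
rewrite e1 in iTP cTP; rewrite e2 in iZQ cZQ; rewrite e3 in iTQ cTQ.
have pTP : 0 < coef (LSmul Tk P) (n.+2 * k)%N%:Z by rewrite cTP cT mul1r.
have pZQ : 0 < coef (LSmul Zk Q) (n.+2 * k)%N%:Z by rewrite cZQ cZ mul1r.
have pTQ : 0 < coef (LSmul Tk Q) (n.+1 * k)%N%:Z by rewrite cTQ cT mul1r.
have [iP' cP'] := isdeg_add2 iTP iZQ pTP pZQ.
have [iQ' cQ'] := isdeg_add2 iP iTQ cP pTQ.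
split; first exact: isdeg_eq (eqLS_sym EP) iP'.
split; first by rewrite EP cP' addr_gt0.
split; first exact: isdeg_eq (eqLS_sym EQ) iQ'.
split; first by rewrite EQ cQ' addr_gt0.
have -> : LSsub (LSmul Zk (LSmul (LSpoly (pell n.+1).2) (LSpoly (pell n.+1).2)))
      (LSmul (LSpoly (pell n.+1).1) (LSpoly (pell n.+1).1)) ~=
    LSsub (LSmul Zk (LSmul (LSadd P (LSmul Tk Q)) (LSadd P (LSmul Tk Q))))
      (LSmul (LSadd (LSmul Tk P) (LSmul Zk Q)) (LSadd (LSmul Tk P) (LSmul Zk Q))).
  apply: LSadd_eq; first by apply: LSmul_eq => //; apply: LSmul_eq.
  by apply: LSopp_eq; apply: LSmul_eq.
have -> : LSsub (LSmul Zk (LSmul (LSadd P (LSmul Tk Q)) (LSadd P (LSmul Tk Q))))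
      (LSmul (LSadd (LSmul Tk P) (LSmul Zk Q)) (LSadd (LSmul Tk P) (LSmul Zk Q))) ~=
    LSmul (LSsub (LSmul Tk Tk) Zk) (LSsub (LSmul Zk (LSmul Q Q)) (LSmul P P)) by ring.
move: N; rewrite -/P -/Q => N.
by setoid_rewrite N; setoid_rewrite TT; ring.
Qed.

End Pell.

Local Open Scope classical_set_scope.

Lemma ef_ident a Z P Q : ~ Q ~= LSzero -> LSmul a a ~= Z ->
  LSmul (LSsub a (LSmul P (LSinv Q))) (LSadd a (LSmul P (LSinv Q))) ~=
  LSmul (LSsub (LSmul Z (LSmul Q Q)) (LSmul P P)) (LSmul (LSinv Q) (LSinv Q)).
Proof.
move=> nz hZ; have PQ := LSinvP nz.
have -> : LSmul (LSsub a (LSmul P (LSinv Q))) (LSadd a (LSmul P (LSinv Q))) ~=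
  LSsub (LSmul a a) (LSmul (LSmul P P) (LSmul (LSinv Q) (LSinv Q))) by ring.
have -> : LSmul (LSsub (LSmul Z (LSmul Q Q)) (LSmul P P)) (LSmul (LSinv Q) (LSinv Q)) ~=
  LSsub (LSmul Z (LSmul (LSmul Q (LSinv Q)) (LSmul Q (LSinv Q)))) (LSmul (LSmul P P) (LSmul (LSinv Q) (LSinv Q))) by ring.
by setoid_rewrite hZ; setoid_rewrite PQ; ring.
Qed.

Lemma div_by a b : ~ b ~= LSzero -> a ~= LSmul (LSmul a b) (LSinv b).
Proof.
move=> nz; have P := LSinvP nz.
have -> : LSmul (LSmul a b) (LSinv b) ~= LSmul a (LSmul b (LSinv b)) by ring.
by setoid_rewrite P; ring.
Qed.

Lemma sz_of (q : {poly rat}) (d : int) : q != 0 -> isdeg (LSpoly q) d -> (size q)%:Z - 1 = d.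
Proof. by move=> hq hd; apply: isdeg_uniq (proj1 (isdeg_poly hq)) hd. Qed.

Lemma pell_approx k n : (0 < k)%N ->
  (pell k n).2 != 0 /\ (size (pell k n).2)%:Z - 1 = (n * k)%N%:Z /\
  isdeg (LSsub (aP k) (ratf (pell k n))) (- 2 * (n * k)%N%:Z - k%:Z).
Proof.
move=> k0.
have [iP [cP [iQ [cQ N]]]] := pell_props k0 n.
set P := LSpoly (pell k n).1 in iP cP N; set Q := LSpoly (pell k n).2 in iQ cQ N.
have hq : (pell k n).2 != 0.
  by apply/negP => /eqP h; apply: (isdeg_nz iQ); rewrite /Q h => m; rewrite coefLSP coefLS0 coef0; case: ifP.
split => //; split; first exact: sz_of hq iQ.
have nzQ := isdeg_nz iQ.
have [iA cA] := isdeg_aP k0.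
have [iiQ ciQ] := isdeg_inv iQ.
have [iPQ cPQ] := isdeg_mul iP iiQ.
have e1 : (n.+1 * k)%N%:Z + - (n * k)%N%:Z = k%:Z by lia.
rewrite e1 in iPQ cPQ.
have pPQ : 0 < coef (LSmul P (LSinv Q)) k%:Z by rewrite cPQ ciQ divr_gt0.
have pA : 0 < coef (aP k) k%:Z by rewrite cA.
have [iF cF] := isdeg_add2 iA iPQ pA pPQ.
set f := LSadd (aP k) (LSmul P (LSinv Q)) in iF.
set e := LSsub (aP k) (LSmul P (LSinv Q)).
have EF := ef_ident P nzQ (aP_sq k0).
rewrite -/e -/f in EF.
have hEF : isdeg (LSmul e f) (- ((n * k)%N%:Z + (n * k)%N%:Z)).
  apply: isdeg_eq (eqLS_sym EF) _.
  have [iQQ _] := isdeg_mul iiQ iiQ.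
  have [iM _] := isdeg_opp (proj1 isdeg_one).
  have [iMQ _] := isdeg_mul iM iQQ.
  have E2 : LSmul (LSsub (LSmul (Zk k) (LSmul Q Q)) (LSmul P P)) (LSmul (LSinv Q) (LSinv Q)) ~=
    LSmul (LSopp LSone) (LSmul (LSinv Q) (LSinv Q)) by apply: LSmul_eq.
  apply: isdeg_eq (eqLS_sym E2) _.
  have -> : - ((n * k)%N%:Z + (n * k)%N%:Z) = 0 + (- (n * k)%N%:Z + - (n * k)%N%:Z) by lia.
  exact: iMQ.
have [iif _] := isdeg_inv iF.
have [ie _] := isdeg_mul hEF iif.
have := isdeg_eq (eqLS_sym (div_by e (isdeg_nz iF))) ie.
by congr isdeg; lia.
Qed.

Lemma lia4 (n k : nat) (C : int) : (0 < k)%N -> n = absz C ->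
  - 2 * (n * k)%N%:Z - k%:Z + (n * k)%N%:Z < C.
Proof. move=> hk ->; have : (absz C <= absz C * k)%N by rewrite leq_pmulr. lia. Qed.

Lemma aP_irr k : (0 < k)%N -> ~ is_ratfun (aP k).
Proof.
move=> k0; apply: irr_crit => C.
have [hq [sq hd]] := pell_approx (absz C) k0.
exists (pell k (absz C)); exists (- 2 * (absz C * k)%N%:Z - k%:Z); split => //; split => //.
by rewrite sq; apply: lia4.
Qed.

Lemma aP_inf k : (0 < k)%N -> infinite_set (approx_set (aP k) k%:Z).
Proof.
move=> k0; apply: approx_inf => B.
have [hq [sq hd]] := pell_approx (absz B) k0.
exists (pell k (absz B), - 2 * (absz B * k)%N%:Z - k%:Z); split; last split => //=.
  split => //; apply: le_deg_mono (proj2 hd) _; rewrite /bnd sq; lia.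
have := lia4 k0 (erefl (absz B)); lia.
Qed.

Lemma integral_le_zero x : integral x -> le_deg x (-1) -> x ~= LSzero.
Proof.
move=> h1 h2; apply/eq0P => n; case: (ltrP n 0) => hn; first exact: h1.
by apply: h2; lia.
Qed.

Lemma lia5 (s k : nat) : (0 < s)%N -> - 2 * (s%:Z - 1) - (k%:Z + 1) <= k%:Z - 1.
Proof. lia. Qed.

Lemma aP_fin k : (0 < k)%N -> approx_set (aP k) (k%:Z + 1) = set0.
Proof.
move=> k0; rewrite approx_setE; apply/seteqP; split => // _ [[p q] [/= hq he] _].
exfalso; apply: (aP_irr k0).
set P := LSpoly p; set Q := LSpoly q.
have nzQ := poly_nz hq.
have [iA cA] := isdeg_aP k0.
set e := LSsub (aP k) (LSmul P (LSinv Q)).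
set f := LSadd (aP k) (LSmul P (LSinv Q)).
have he' : le_deg e (bnd q (k%:Z + 1)) by exact: he.
have pA : 0 < coef (aP k) k%:Z by rewrite cA.
have [iAA _] := isdeg_add2 iA iA pA pA.
have Ef : f ~= LSadd (LSadd (aP k) (aP k)) (LSopp e) by rewrite /f /e; ring.
have sq0 : (0 < size q)%N by rewrite size_poly_gt0.
have [iF _] := isdeg_addl iAA (le_deg_opp (le_deg_mono he' (lia5 _ sq0))).
have iF' := isdeg_eq (eqLS_sym Ef) iF.
have EF := ef_ident P nzQ (aP_sq k0).
rewrite -/e -/f in EF.
set M := LSsub (LSmul (Zk k) (LSmul Q Q)) (LSmul P P) in EF.
have intM : integral M.
  by apply: integral_add; [|apply: integral_opp]; apply: integral_mul; rewrite ?/Q;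
     try apply: integral_mul; apply: integral_poly.
have PQ : LSmul Q (LSinv Q) ~= LSone := LSinvP nzQ.
have EM : M ~= LSmul (LSmul e f) (LSmul Q Q).
  setoid_rewrite EF.
  have -> : LSmul (LSmul M (LSmul (LSinv Q) (LSinv Q))) (LSmul Q Q) ~=
    LSmul M (LSmul (LSmul Q (LSinv Q)) (LSmul Q (LSinv Q))) by ring.
  by setoid_rewrite PQ; ring.
have [iQ _] := isdeg_poly hq.
have hM : le_deg M (-1).
  apply: le_deg_eq (eqLS_sym EM) _.
  have := le_deg_mul (le_deg_mul he' (proj2 iF')) (le_deg_mul (proj2 iQ) (proj2 iQ)).
  by move/le_deg_mono; apply; rewrite /bnd; lia.
have M0 := integral_le_zero intM hM.
have ef0 : LSmul e f ~= LSzero by setoid_rewrite EF; setoid_rewrite M0; ring.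
case: (mul_eq0 ef0) => [e0|f0]; last by case: (isdeg_nz iF' f0).
exists p, q; split => //.
have -> : aP k ~= LSadd e (LSmul P (LSinv Q)) by rewrite /e; ring.
by setoid_rewrite e0; rewrite /LSdiv /P /Q; ring.
Qed.

Local Open Scope classical_set_scope.

Lemma lagr_Sset a : ~ is_ratfun a -> Sset (lagr a).
Proof.
move=> irr; apply: sup_Sset.
  by move=> _ [k _ <-]; right; exists k.
exists ((1%:~R : RR)%:E); split; last by right; exists 1.
by exists 1 => //; apply: approx_inf; apply: dirichlet.
Qed.

Lemma lagr_aL : lagr aL = +oo%E.
Proof.
apply: all_int_pinfty => j; apply: ereal_sup_ubound; exists j => //.
exact: aL_inf.
Qed.

Lemma lagr_aP k : (0 < k)%N -> lagr (aP k) = ((k%:Z)%:~R : RR)%:E.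
Proof.
move=> k0; apply/eqP; rewrite eq_le; apply/andP; split.
  apply: ge_ereal_sup => _ [j /= hj <-]; rewrite lee_fin ler_int.
  rewrite leNgt; apply/negP => hjk; apply: hj.
  apply: (@sub_finite_set _ _ (approx_set (aP k) (k%:Z + 1))).
    by apply: approx_mono; lia.
  by rewrite aP_fin.
by apply: ereal_sup_ubound; exists k%:Z => //; apply: aP_inf.
Qed.

Theorem theorem9 : lagrange_spectrum = L_values.
Proof.
rewrite L_values_Sset; apply/seteqP; split.
  by move=> _ [a /= irr <-]; apply: lagr_Sset.
move=> x [->|[k [hk ->]]].
  by exists aL; [exact: aL_irr|exact: lagr_aL].
have k0 : (0 < absz k)%N by lia.
exists (aP (absz k)); first exact: aP_irr.
by rewrite lagr_aP //; congr (_%:E); congr (_%:~R); lia.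
Qed.
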